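(* Let $\mathbb{P}=\varprojlim\langle\{P_n\},\{p^n_k\}_{k<n}\rangle$ where $\langle\{P_n\},\{p^n_k\}\rangle$ is a Fraïssé sequence in the category of finite posets with quotient maps. Let $A,B$ be finite posets (discrete topology), $f:\mathbb{P}\to A$ a continuous quotient map and $g:B\to A$ a quotient map. Then there is a continuous quotient map $h:\mathbb{P}\to B$ with $g\circ h=f$.
   Context: A quotient map between posets is a surjective order-preserving map $\phi:A\to B$ such that for all $p\le r$ in $B$ there are $x\le y$ in $A$ with $\phi(x)=p,\phi(y)=r$. The inverse limit of nonempty finite posets $P_n$ with quotient maps $p^m_k:P_m\to P_k$ ($k<m$, $p^k_l\circ p^m_k=p^m_l$) is $\{(x_n)\in\prod_nP_n:p^{n+1}_n(x_{n+1})=x_n\ \forall n\}$, ordered coordinatewise, with the subspace topology of the product of discrete spaces. The sequence is a Fraïssé sequence if (U) for every finite poset $X$ there are $n$ and a quotient map $P_n\to X$, and (A) for every $k$, every finite poset $Y$ and quotient map $f:Y\to P_k$ there exist $\ell>k$ and a quotient map $g:P_\ell\to Y$ with $f\circ g=p^\ell_k$. *)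

(* Defs.v *)
From mathcomp Require Import all_boot.
Unset Strict Implicit. Unset Printing Implicit Defensive.

Record finPoset := FinPoset {
  fp_car :> finType;
  fp_le : rel fp_car;
  fp_refl : forall x, fp_le x x;
  fp_antisym : forall x y, fp_le x y -> fp_le y x -> x = y;
  fp_trans : forall x y z, fp_le x y -> fp_le y z -> fp_le x z }.
Arguments fp_le {f} _ _.

(* Quotient map between (pre)ordered sets, with order relations given
   explicitly (used both for finite posets and for the inverse limit). *)
Definition quotient_map {A B : Type} (leA : A -> A -> Prop) (leB : B -> B -> Prop)
  (phi : A -> B) : Prop :=
  [/\ (forall b, exists a, phi a = b),
      (forall x y, leA x y -> leB (phi x) (phi y)) &
      (forall q r, leB q r -> exists x y, [/\ leA x y, phi x = q & phi y = r])].

Definition fquot {A B : finPoset} (phi : A -> B) : Prop :=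
  quotient_map (fun x y => @fp_le A x y) (fun x y => @fp_le B x y) phi.

(* An inverse sequence: p m k : P m -> P k (only meaningful for k < m). *)
Definition inverse_seq (P : nat -> finPoset) (p : forall m k, P m -> P k) : Prop :=
  (forall m k, k < m -> fquot (p m k : P m -> P k)) /\
  (forall l k m, l < k -> k < m -> forall x, p k l (p m k x) = p m l x).

Definition fraisse_seq (P : nat -> finPoset) (p : forall m k, P m -> P k) : Prop :=
  (forall X : finPoset, 0 < #|X| -> exists n (q : P n -> X), fquot q) /\
  (forall k (Y : finPoset) (f : Y -> P k), fquot f ->
     exists l (g : P l -> Y), [/\ k < l, fquot g & forall x, f (g x) = p l k x]).

Definition invlim (P : nat -> finPoset) (p : forall m k, P m -> P k) : Type :=
  {x : forall n, P n | forall n, p n.+1 n (x n.+1) = x n}.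

Definition invlim_le (P : nat -> finPoset) (p : forall m k, P m -> P k) (x y : invlim P p) : Prop :=
  forall n, @fp_le (P n) (sval x n) (sval y n).

(* Continuity of a map from the inverse limit (subspace of the product of
   discrete spaces) into a discrete space: each point has a basic open
   neighbourhood (fixing finitely many coordinates) on which the map is constant. *)
Definition invlim_continuous (P : nat -> finPoset) (p : forall m k, P m -> P k) {T : Type} (f : invlim P p -> T) : Prop :=
  forall x, exists N, forall y : invlim P p,
    (forall n, n <= N -> sval y n = sval x n) -> f y = f x.

(* Main.v *)
Require Import Defs.
From mathcomp Require Import all_boot.
From Stdlib Require Import ClassicalEpsilon Classical.
From mathcomp Require Import zify.

Lemma compat (P : nat -> finPoset) (p : forall m k, P m -> P k)
  (Hseq : inverse_seq P p) (x : invlim P p) n m : n < m -> p m n (sval x m) = sval x n.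
Proof.
case: x => x /= Hx.
elim: m => // m IH; rewrite ltnS leq_eqVlt => /orP [/eqP <-|lt]; first exact: Hx.
rewrite -(proj2 Hseq n m m.+1) // Hx; exact: IH.
Qed.

Lemma thread_exists (Q : nat -> Type) (V : forall k, Q k -> Prop)
  (R : forall k, Q k.+1 -> Q k -> Prop) (q0 : Q 0) (V0 : V 0 q0)
  (HR : forall k a, V k a -> exists b, V k.+1 b /\ R k b a) :
  exists x : forall k, Q k, x 0 = q0 /\ forall k, V k (x k) /\ R k (x k.+1) (x k).
Proof.
pose Q' k := {a : Q k | V k a}.
have HR' : forall k (a : Q' k), {b : Q' k.+1 | R k (sval b) (sval a)}.
  move=> k [a Va]; have /constructive_indefinite_description [b [Vb Rb]] := HR k a Va.
  by exists (exist _ b Vb).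
pose fix xs k : Q' k := match k with 0 => exist _ q0 V0 | k'.+1 => sval (HR' k' (xs k')) end.
exists (fun k => sval (xs k)); split => // k; split; first exact: (svalP (xs k)).
exact: (svalP (HR' k (xs k))).
Qed.

Lemma lift_pair (P : nat -> finPoset) (p : forall m k, P m -> P k)
  (Hseq : inverse_seq P p) n (a b : P n) : fp_le a b ->
  exists x y : invlim P p, [/\ invlim_le P p x y, sval x n = a & sval y n = b].
Proof.
move=> ab.
pose Q (j : nat) := prod (P (j + n)) (P (j + n)).
pose base (j : nat) : Q j -> Prop :=
  match j as j0 return Q j0 -> Prop with
  | 0 => fun q => q = (a, b)
  | j'.+1 => fun q => p (j'.+1 + n) n q.1 = a /\ p (j'.+1 + n) n q.2 = b end.
pose V (j : nat) (q : Q j) := fp_le q.1 q.2 /\ base j q.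
pose R (j : nat) (q' : Q j.+1) (q : Q j) := p (j.+1 + n) (j + n) q'.1 = q.1 /\ p (j.+1 + n) (j + n) q'.2 = q.2.
have [z [z0 Hz]] : exists z : forall k, Q k, z 0 = (a, b) /\ forall k, V k (z k) /\ R k (z k.+1) (z k).
  apply: (@thread_exists Q V R); first by split.
  move=> j [c d] [cd Hcd].
  have [_ _ Hq] := proj1 Hseq (j.+1 + n) (j + n) (leqnn _).
  have [c' [d' [cd' e1 e2]]] := Hq c d cd.
  exists (c', d'); split; last by split.
  split => //=.
  clear Hq; move: c d c' d' cd cd' Hcd e1 e2; case: j => [|j] c d c' d' cd cd' Hcd e1 e2.
    by case: Hcd => <- <-; split.
  case: Hcd => /= <- <-.
  rewrite -e1 -e2 !(proj2 Hseq n (j.+1 + n) (j.+2 + n)) //;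
  by rewrite ?addSn ?leq_addl ?ltnS ?leq_addl.
have Hb : forall k, p (k.+1 + n) n (z k.+1).1 = a /\ p (k.+1 + n) n (z k.+1).2 = b.
  by move=> k; have [[_ ]] := Hz k.+1.
pose x k := p (k.+1 + n) k (z k.+1).1.
pose y k := p (k.+1 + n) k (z k.+1).2.
have thx : forall k, p k.+1 k (x k.+1) = x k.
  move=> k; rewrite /x.
  rewrite (proj2 Hseq k k.+1 (k.+2 + n)); last by lia. 2: by lia.
  have [_ [<- _]] := Hz k.+1.
  by rewrite (proj2 Hseq k (k.+1 + n) (k.+2 + n)) //; lia.
have thy : forall k, p k.+1 k (y k.+1) = y k.
  move=> k; rewrite /y.
  rewrite (proj2 Hseq k k.+1 (k.+2 + n)); last by lia. 2: by lia.
  have [_ [_ <-]] := Hz k.+1.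
  by rewrite (proj2 Hseq k (k.+1 + n) (k.+2 + n)) //; lia.
exists (exist _ x thx), (exist _ y thy); split => /=.
- move=> k /=; rewrite /x /y.
  have [[le _] _] := Hz k.+1.
  have [_ Hm _] := proj1 Hseq (k.+1 + n) k ltac:(lia).
  exact: Hm.
- by rewrite /x; case: (Hb n).
- by rewrite /y; case: (Hb n).
Qed.

Lemma uniform (P : nat -> finPoset) (p : forall m k, P m -> P k)
  (Hseq : inverse_seq P p) (T : Type) (f : invlim P p -> T)
  (Hfc : invlim_continuous P p f) :
  exists N, forall x y : invlim P p, sval x N = sval y N -> f x = f y.
Proof.
apply: NNPP => Hno.
pose bad n (a : P n) := exists x y : invlim P p, [/\ sval x n = a, sval y n = a & f x <> f y].
have Hbad : forall N, exists a : P N, bad N a.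
  move=> N; apply: NNPP => Hn; apply: Hno; exists N => x y exy.
  apply: NNPP => nf; apply: Hn; exists (sval x N); exists x, y; split => //.
have bad_down : forall n m (b : P m), n < m -> bad m b -> bad n (p m n b).
  move=> n m b nm [x [y [ex ey nf]]]; exists x, y; split => //.
    by rewrite -ex (compat _ _ Hseq).
  by rewrite -ey (compat _ _ Hseq).
pose eb n (a : P n) := forall m, n < m -> exists c : P m, bad m c /\ p m n c = a.
have eb_of : forall n (S : P n -> Prop),
    (forall M, n < M -> exists c : P M, bad M c /\ S (p M n c)) -> exists a, S a /\ eb n a.
  move=> n S HS; apply: NNPP => Hn.
  have H1 : forall a : P n, exists m, n < m /\ (S a -> forall c : P m, bad m c -> p m n c <> a).
    move=> a; case: (classic (S a)) => Sa; last by exists n.+1; split.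
    have : ~ eb n a by move=> eba; apply: Hn; exists a.
    move=> /not_all_ex_not [m Hm]; exists m.
    have [nm Hm'] := imply_to_and _ _ Hm; split => // _ c bc e.
    by apply: Hm'; exists c.
  pose mf a := proj1_sig (constructive_indefinite_description _ (H1 a)).
  have Hmf a : n < mf a /\ (S a -> forall c : P (mf a), bad (mf a) c -> p (mf a) n c <> a).
    exact: (proj2_sig (constructive_indefinite_description _ (H1 a))).
  pose M := \max_(a : P n) mf a + n.+1.
  have [c [bc Sc]] := HS M ltac:(rewrite /M; lia).
  set a := p M n c in Sc.
  have lt1 : mf a < M.
    have := @leq_bigmax _ mf a; rewrite /M; lia.
  have [nm Hm] := Hmf a.
  apply: (Hm Sc (p M (mf a) c)); first exact: bad_down.
  by rewrite (proj2 Hseq n (mf a) M).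
have [a0 [_ eb0]] := eb_of 0 (fun _ => True) (fun M _ => ltac:(have [c bc] := Hbad M; by exists c)).
have step : forall n (a : P n), eb n a -> exists b : P n.+1, eb n.+1 b /\ p n.+1 n b = a.
  move=> n a eba.
  have [b [e1 e2]] := eb_of n.+1 (fun b => p n.+1 n b = a) (fun M nM =>
    ltac:(have [c [bc ec]] := eba M ltac:(lia); exists c; split => //;
          by rewrite (proj2 Hseq n n.+1 M))).
  by exists b.
have [x [x0 Hx]] := @thread_exists P eb (fun k b a => p k.+1 k b = a) a0 eb0 step.
have thx : forall n, p n.+1 n (x n.+1) = x n by move=> n; case: (Hx n).
pose xi : invlim P p := exist _ x thx.
have [N HN] := Hfc xi.
have [[c [bc ec]] _] := (fun h => conj (proj1 (Hx N) N.+1 h) h) (ltnSn N).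
have := bad_down N N.+1 c (ltnSn N) bc; rewrite ec.
move=> [y1 [y2 [e1 e2 nf]]]; apply: nf.
have agree : forall y : invlim P p, sval y N = x N -> f y = f xi.
  move=> y ey; apply: HN => m; rewrite leq_eqVlt => /orP [/eqP ->|mN] //.
  by rewrite -(compat _ _ Hseq y m N mN) ey -(compat _ _ Hseq xi m N mN).
by rewrite (agree y1 e1) (agree y2 e2).
Qed.
Set Implicit Arguments.


Definition pbT (C B A : finPoset) (u : C -> A) (g : B -> A) : finType :=
  {pr : prod C B | u pr.1 == g pr.2}.
Arguments pbT {C B A} u g.

Definition pble (C B A : finPoset) (u : C -> A) (g : B -> A) : rel (pbT u g) :=
  fun s t => fp_le (val s).1 (val t).1 && fp_le (val s).2 (val t).2.
Arguments pble {C B A} u g.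

Lemma pble_refl C B A u g : forall x, @pble C B A u g x x.
Proof. by move=> x; rewrite /pble !fp_refl. Qed.

Lemma pble_anti C B A u g : forall x y, @pble C B A u g x y -> pble u g y x -> x = y.
Proof.
move=> [[a b] h] [[a' b'] h'] /andP [/= l1 l2] /andP [/= l3 l4]; apply: val_inj => /=.
by rewrite (fp_antisym _ _ _ l1 l3) (fp_antisym _ _ _ l2 l4).
Qed.

Lemma pble_trans C B A u g : forall x y z, @pble C B A u g x y -> pble u g y z -> pble u g x z.
Proof.
move=> x y z /andP [l1 l2] /andP [l3 l4]; apply/andP; split; by apply: fp_trans; eassumption.
Qed.

Definition pb (C B A : finPoset) (u : C -> A) (g : B -> A) : finPoset :=
  @FinPoset (pbT u g) (pble u g) (@pble_refl C B A u g) (@pble_anti C B A u g) (@pble_trans C B A u g).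
Arguments pb {C B A} u g.

Definition pr1 (C B A : finPoset) (u : C -> A) (g : B -> A) (y : pb u g) : C := (val y).1.
Definition pr2 (C B A : finPoset) (u : C -> A) (g : B -> A) (y : pb u g) : B := (val y).2.

Lemma pr1_quot (C B A : finPoset) (u : C -> A) (g : B -> A) :
  (forall a a', fp_le a a' -> fp_le (u a) (u a')) -> fquot g -> fquot (@pr1 C B A u g).
Proof.
move=> hu [gs _ gl]; split.
- move=> c; have [b eb] := gs (u c).
  by exists (exist (fun pr : prod C B => u pr.1 == g pr.2) (c, b) (introT eqP (esym eb))).
- by move=> x y /andP [].
- move=> q r qr; have [b [b' [bb e1 e2]]] := gl _ _ (hu _ _ qr).
  exists (exist (fun pr : prod C B => u pr.1 == g pr.2) (q, b) (introT eqP (esym e1))).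
  exists (exist (fun pr : prod C B => u pr.1 == g pr.2) (r, b') (introT eqP (esym e2))).
  by split => //; apply/andP.
Qed.

Lemma pr2_quot (C B A : finPoset) (u : C -> A) (g : B -> A) :
  fquot u -> (forall a a', fp_le a a' -> fp_le (g a) (g a')) -> fquot (@pr2 C B A u g).
Proof.
move=> [us _ ul] hg; split.
- move=> b; have [c ec] := us (g b).
  by exists (exist (fun pr : prod C B => u pr.1 == g pr.2) (c, b) (introT eqP ec)).
- by move=> x y /andP [].
- move=> q r qr; have [c [c' [cc e1 e2]]] := ul _ _ (hg _ _ qr).
  exists (exist (fun pr : prod C B => u pr.1 == g pr.2) (c, q) (introT eqP e1)).
  exists (exist (fun pr : prod C B => u pr.1 == g pr.2) (c', r) (introT eqP e2)).
  by split => //; apply/andP.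
Qed.

Lemma pb_comm (C B A : finPoset) (u : C -> A) (g : B -> A) (y : pb u g) :
  u (pr1 y) = g (pr2 y).
Proof. exact: (eqP (valP y)). Qed.
Unset Implicit Arguments.

Theorem mainTheorem8 (P : nat -> finPoset) (p : forall m k, P m -> P k)
  (HPne : forall n, 0 < #|P n|)
  (Hseq : inverse_seq P p) (Hfr : fraisse_seq P p)
  (A B : finPoset) (f : invlim P p -> A) (g : B -> A)
  (Hfc : invlim_continuous P p f)
  (Hfq : quotient_map (invlim_le P p) (fun a a' => fp_le a a') f)
  (Hgq : fquot g) :
  exists h : invlim P p -> B,
    [/\ invlim_continuous P p h,
        quotient_map (invlim_le P p) (fun b b' => fp_le b b') h &
        forall x, g (h x) = f x].
Proof.
have [N HN] := uniform _ _ Hseq _ _ Hfc.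
have lift1 : forall a : P N, exists x : invlim P p, sval x N = a.
  move=> a; have [x [y [_ ex _]]] := lift_pair _ _ Hseq _ _ _ (fp_refl _ a); by exists x.
pose xa a := proj1_sig (constructive_indefinite_description _ (lift1 a)).
have Hxa a : sval (xa a) N = a := proj2_sig (constructive_indefinite_description _ (lift1 a)).
pose f' (a : P N) := f (xa a).
have Hf' : forall x, f x = f' (sval x N).
  by move=> x; apply: HN; rewrite Hxa.
have [fs fo fl] := Hfq.
have f'o : forall a a', fp_le a a' -> fp_le (f' a) (f' a').
  move=> a a' aa; have [x [y [xy ex ey]]] := lift_pair _ _ Hseq _ _ _ aa.
  by rewrite -ex -ey -!Hf'; apply: fo.
have f'q : fquot f'.
  split => //.
  - by move=> b; have [x <-] := fs b; exists (sval x N); rewrite Hf'.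
  - move=> q r qr; have [x [y [xy ex ey]]] := fl q r qr.
    by exists (sval x N), (sval y N); rewrite -!Hf'; split.
have [_ go _] := Hgq.
have [_ HA] := Hfr.
have [l [g0 [Nl g0q Hg0]]] := HA N (pb f' g) (@pr1 _ _ _ f' g) (@pr1_quot _ _ _ f' g f'o Hgq).
pose h (x : invlim P p) := pr2 (g0 (sval x l)).
have [g0s g0o g0l] := g0q.
have [p2s p2o p2l] := @pr2_quot _ _ _ f' g f'q go.
exists h; split.
- move=> x; exists l => y Hy; by rewrite /h (Hy l (leqnn l)).
- split.
  + move=> b; have [u <-] := p2s b; have [c <-] := g0s u.
    have [x [_ [_ ex _]]] := lift_pair _ _ Hseq _ _ _ (fp_refl _ c).
    by exists x; rewrite /h ex.
  + move=> x y xy; apply: p2o; apply: g0o; exact: xy.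
  + move=> q r qr; have [u [u' [uu <- <-]]] := p2l q r qr.
    have [c [c' [cc <- <-]]] := g0l u u' uu.
    have [x [y [xy ex ey]]] := lift_pair _ _ Hseq _ _ _ cc.
    by exists x, y; rewrite /h ex ey.
- move=> x; rewrite /h -pb_comm Hg0 Hf' (compat _ _ Hseq x N l Nl) //.
Qed.
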